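(* Let $D$ be a Newton diagram in $2$ variables whose support $K$ has size $d$, is connected, and contains $(0,0)$. Let $k<d$ and suppose $K$ contains all $m\in\mathbb N_0^2$ with $|m|\le k-1$. Then there is an extension $D'$ of $D$ with $\#(D')\le\#(D)$ whose support contains all $m\in\mathbb N_0^2$ with $|m|\le k$.
   Context: For $m\in\mathbb Z^n$ write $|m|=m_1+\dots+m_n$; $e_1,\dots,e_n$ is the standard basis. A Newton diagram in $n$ variables is a function $D\colon\mathbb Z^n\to\{0,P,N\}$ ($P,N$ formal symbols) whose support $K=D^{-1}(\{P,N\})$ is a finite nonempty subset of $\mathbb N_0^n$. For $a\in\mathbb Z^n$ let $E(a)=\{a,a-e_1,\dots,a-e_n\}$; $E(a)$ is a node of $D$ if the image $D(E(a))$ equals $\{P\}$, $\{N\}$, $\{0,P\}$ or $\{0,N\}$. $\#(D)$ is the number of $a\in\mathbb Z^n$ for which $E(a)$ is a node. Two distinct points $m,m'$ are adjacent if $m-m'\in\{\pm e_j\}\cup\{e_j-e_k: j\ne k\}$; $K$ is connected if any two points of $K$ are joined by a path of successively adjacent points of $K$. The size of $K$ is $k-|a|+1$ where $k=\max_{m\in K}|m|$ and $a_j=\min_{m\in K}m_j$. A Newton diagram $D'$ with support $K'$ is an extension of $D$ if $K\subset K'$ and $D'|_K=D|_K$. *)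

(* Defs.v *)
From Stdlib Require Import ZArith List.
Import ListNotations.
Open Scope Z_scope.

Inductive sym : Type := S0 | SP | SN.

Definition pt : Type := (Z * Z)%type.

Definition diagram : Type := pt -> sym.

Definition in_supp (D : diagram) (m : pt) : Prop := D m <> S0.

Definition newton_diagram (D : diagram) : Prop :=
  (exists L : list pt, forall m, in_supp D m <-> In m L) /\
  (exists m, in_supp D m) /\
  (forall m, in_supp D m -> 0 <= fst m /\ 0 <= snd m).

Definition absm (m : pt) : Z := fst m + snd m.

Definition Eset (a : pt) : list pt :=
  [a; (fst a - 1, snd a); (fst a, snd a - 1)].

Definition image_eq (D : diagram) (a : pt) (S : list sym) : Prop :=
  forall s, In s S <-> exists x, In x (Eset a) /\ D x = s.

Definition is_node (D : diagram) (a : pt) : Prop :=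
  image_eq D a [SP] \/ image_eq D a [SN] \/
  image_eq D a [S0; SP] \/ image_eq D a [S0; SN].

Definition num_nodes (D : diagram) (c : nat) : Prop :=
  exists l : list pt, NoDup l /\ (forall a, In a l <-> is_node D a) /\
                      length l = c.

Definition adjacent (m m' : pt) : Prop :=
  let d := (fst m - fst m', snd m - snd m') in
  In d [(1,0); (-1,0); (0,1); (0,-1); (1,-1); (-1,1)].

Fixpoint adj_path (D : diagram) (x : pt) (p : list pt) : Prop :=
  match p with
  | [] => True
  | y :: p' => adjacent x y /\ in_supp D y /\ adj_path D y p'
  end.

Definition supp_connected (D : diagram) : Prop :=
  forall x y, in_supp D x -> in_supp D y ->
    exists p, adj_path D x p /\ last p x = y.

Definition supp_size (D : diagram) (d : Z) : Prop :=
  exists k a1 a2,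
    (exists m, in_supp D m /\ absm m = k) /\ (forall m, in_supp D m -> absm m <= k) /\
    (exists m, in_supp D m /\ fst m = a1) /\ (forall m, in_supp D m -> a1 <= fst m) /\
    (exists m, in_supp D m /\ snd m = a2) /\ (forall m, in_supp D m -> a2 <= snd m) /\
    d = k - (a1 + a2) + 1.

Definition extension (D' D : diagram) : Prop :=
  newton_diagram D' /\
  (forall m, in_supp D m -> in_supp D' m) /\
  (forall m, in_supp D m -> D' m = D m).

(* Main.v *)
Require Import Defs.
From Stdlib Require Import ZArith List Lia Bool.
Import ListNotations.
Open Scope Z_scope.

Definition sym_eqb (a b : sym) : bool :=
  match a, b with S0,S0 | SP,SP | SN,SN => true | _,_ => false end.
Lemma sym_eqb_spec a b : sym_eqb a b = true <-> a = b.
Proof. destruct a, b; simpl; split; congruence. Qed.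

Definition inb (s : sym) (S : list sym) := existsb (sym_eqb s) S.
Lemma inb_spec s S : inb s S = true <-> In s S.
Proof. unfold inb. rewrite existsb_exists. split.
 - intros [x [H1 H2]]. apply sym_eqb_spec in H2. subst; auto.
 - intros H. exists s. split; auto. apply sym_eqb_spec; auto. Qed.

Definition imgb (S : list sym) (x y z : sym) : bool :=
  forallb (fun s => Bool.eqb (inb s S) (sym_eqb x s || sym_eqb y s || sym_eqb z s)) [S0;SP;SN].

Definition nodeb x y z := imgb [SP] x y z || imgb [SN] x y z || imgb [S0;SP] x y z || imgb [S0;SN] x y z.

Lemma image_eq_b D a S : image_eq D a S <->
  imgb S (D a) (D (fst a - 1, snd a)) (D (fst a, snd a - 1)) = true.
Proof.
  unfold image_eq, imgb. rewrite forallb_forall. split.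
  - intros H s _. apply Bool.eqb_true_iff.
    destruct (inb s S) eqn:E.
    + apply inb_spec, H in E. destruct E as [x [Hx Hd]]. simpl in Hx.
      symmetry. repeat rewrite orb_true_iff. repeat rewrite sym_eqb_spec.
      destruct Hx as [<-|[<-|[<-|[]]]]; auto.
    + symmetry. apply not_true_iff_false. intro C.
      repeat rewrite orb_true_iff in C. repeat rewrite sym_eqb_spec in C.
      assert (In s S). { apply H. simpl.
        destruct C as [[C|C]|C]; eexists; split; [|exact C| |exact C| |exact C]; auto. }
      apply inb_spec in H0. congruence.
  - intros H s. assert (Hs : In s [S0;SP;SN]) by (destruct s; simpl; auto).
    specialize (H s Hs). apply Bool.eqb_prop in H.
    rewrite <- inb_spec, H. repeat rewrite orb_true_iff. repeat rewrite sym_eqb_spec.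
    simpl. split.
    + intros [[C|C]|C]; eexists; split; [|exact C| |exact C| |exact C]; auto.
    + intros [x [Hx Hd]]. destruct Hx as [<-|[<-|[<-|[]]]]; auto.
Qed.

Lemma node_b D a : is_node D a <->
  nodeb (D a) (D (fst a - 1, snd a)) (D (fst a, snd a - 1)) = true.
Proof.
  unfold is_node, nodeb. rewrite !image_eq_b. rewrite !orb_true_iff. tauto.
Qed.

Lemma M1a s y z : y <> S0 -> nodeb s y z = true -> nodeb S0 y z = true.
Proof. destruct s, y, z; simpl; intros; try reflexivity; try discriminate; congruence. Qed.
Lemma M1b s y z : z <> S0 -> nodeb s y z = true -> nodeb S0 y z = true.
Proof. destruct s, y, z; simpl; intros; try reflexivity; try discriminate; congruence. Qed.
Lemma M1c q s z : z <> S0 -> nodeb q s z = true -> nodeb q S0 z = true.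
Proof. destruct q, s, z; simpl; intros; try reflexivity; try discriminate; congruence. Qed.
Lemma M1d q y s : y <> S0 -> nodeb q y s = true -> nodeb q y S0 = true.
Proof. destruct q, s, y; simpl; intros; try reflexivity; try discriminate; congruence. Qed.
Lemma M2 q s t : s <> S0 -> t <> S0 -> s <> t -> nodeb q s t = false.
Proof. destruct q, s, t; simpl; intros; try reflexivity; try discriminate; congruence. Qed.
Lemma M3a s r : r <> S0 -> s <> S0 -> s <> r -> nodeb s S0 r = false.
Proof. destruct s, r; simpl; intros; try reflexivity; try discriminate; congruence. Qed.
Lemma M3b s r : r <> S0 -> s <> S0 -> s <> r -> nodeb s r S0 = false.
Proof. destruct s, r; simpl; intros; try reflexivity; try discriminate; congruence. Qed.
Lemma M4a r : r <> S0 -> nodeb S0 S0 r = true.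
Proof. destruct r; simpl; intros; try reflexivity; try discriminate; congruence. Qed.
Lemma M4b r : r <> S0 -> nodeb S0 r S0 = true.
Proof. destruct r; simpl; intros; try reflexivity; try discriminate; congruence. Qed.

Definition flip (s : sym) := match s with SP => SN | SN => SP | S0 => S0 end.
Lemma flip_ne s : s <> S0 -> flip s <> s. Proof. destruct s; simpl; intros; try reflexivity; try discriminate; congruence. Qed.
Lemma flip_nz s : s <> S0 -> flip s <> S0. Proof. destruct s; simpl; intros; try reflexivity; try discriminate; congruence. Qed.

Lemma adj_level x y : adjacent x y -> absm x - 1 <= absm y <= absm x + 1.
Proof. destruct x as [x1 x2], y as [y1 y2]; unfold adjacent, absm; simpl.
  intros H; repeat destruct H as [H|H]; try inversion H; lia. Qed.

Lemma path_level D k : forall p x, in_supp D x -> adj_path D x p ->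
  absm x <= k -> k <= absm (last p x) -> exists z, in_supp D z /\ absm z = k.
Proof.
  induction p as [|y p IH]; intros x Hx Hp H1 H2.
  - simpl in H2. exists x. split; auto; lia.
  - destruct Hp as [Ha [Hy Hp]].
    destruct (Z.eq_dec (absm x) k). { exists x; auto. }
    apply adj_level in Ha.
    assert (E : last (y :: p) x = last p y).
    { clear. destruct p as [|a p]. reflexivity.
      change (last (a :: p) x = last (a :: p) y).
      revert a. induction p as [|b p IHp]; intros a. reflexivity.
      apply (IHp b). }
    rewrite E in H2.
    apply (IH y); auto; try lia.
Qed.

Lemma even_S n : Z.even (n + 1) = negb (Z.even n).
Proof. rewrite Z.even_add. destruct (Z.even n); reflexivity. Qed.

Lemma flip_if (b : bool) (t : sym) : t <> S0 ->
  (if b then flip t else t) <> (if negb b then flip t else t).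
Proof. intros H. destruct b; simpl. apply flip_ne; auto.
  intro C; symmetry in C; revert C; apply flip_ne; auto. Qed.

Lemma count_le (D1 D2 : diagram) (f : pt -> pt) c c' :
  (forall a, is_node D2 a -> is_node D1 (f a)) ->
  (forall a b, is_node D2 a -> is_node D2 b -> f a = f b -> a = b) ->
  num_nodes D1 c -> num_nodes D2 c' -> (c' <= c)%nat.
Proof.
  intros Hf Hi [l [Hl [Hl1 Hl2]]] [l' [Hl' [Hl1' Hl2']]]. subst.
  rewrite <- (length_map f l').
  apply NoDup_incl_length.
  - apply NoDup_map_NoDup_ForallPairs; auto.
    intros a b Ha Hb. apply Hi; apply Hl1'; auto.
  - intros y Hy. apply in_map_iff in Hy. destruct Hy as [a [<- Ha]].
    apply Hl1, Hf, Hl1', Ha.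
Qed.

Section Fill.
Variable D : diagram.
Variable k m0 : Z.
Hypothesis Hneg : forall p, in_supp D p -> 0 <= fst p /\ 0 <= snd p.
Hypothesis Hk : 1 <= k.
Hypothesis Hlow : forall m : pt, 0 <= fst m -> 0 <= snd m -> absm m <= k - 1 -> in_supp D m.
Hypothesis Hm0r : 0 <= m0 <= k.
Hypothesis Hm0 : in_supp D (m0, k - m0).

Definition filledb (p : pt) : bool :=
  (absm p =? k) && (0 <=? fst p) && (0 <=? snd p) && sym_eqb (D p) S0.

Definition fill (i : Z) : sym :=
  if i <? m0 then (if Z.even i then flip (D (0, k-1)) else D (0, k-1))
  else (if Z.even (k - i) then flip (D (k-1, 0)) else D (k-1, 0)).

Definition Dext (p : pt) : sym := if filledb p then fill (fst p) else D p.

Definition fmap (a : pt) : pt :=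
  if (fst a =? 0) && (snd a =? k+1) && sym_eqb (D (0,k)) S0 then (0,k)
  else if (fst a =? k+1) && (snd a =? 0) && sym_eqb (D (k,0)) S0 then (k,0)
  else a.

Lemma Dzero p : (fst p < 0 \/ snd p < 0) -> D p = S0.
Proof. intros H. destruct (D p) eqn:E; auto; exfalso;
  assert (in_supp D p) by (unfold in_supp; congruence); apply Hneg in H0; lia. Qed.

Lemma r0_nz : D (0, k-1) <> S0.
Proof. apply Hlow; unfold absm; simpl; lia. Qed.
Lemma rk_nz : D (k-1, 0) <> S0.
Proof. apply Hlow; unfold absm; simpl; lia. Qed.

Lemma fill_nz i : fill i <> S0.
Proof. unfold fill. pose proof r0_nz. pose proof rk_nz.
  destruct (i <? m0), (Z.even i), (Z.even (k-i)); auto using flip_nz. Qed.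

Lemma fill_alt x : x - 1 <> m0 -> x <> m0 -> fill (x-1) <> fill x.
Proof.
  intros H1 H2. unfold fill. pose proof r0_nz. pose proof rk_nz.
  destruct (Z.ltb_spec (x-1) m0), (Z.ltb_spec x m0); try lia.
  - assert (Ev : Z.even x = negb (Z.even (x-1))) by (rewrite <- even_S; f_equal; lia).
    rewrite Ev.
    apply flip_if; auto.
  - replace (k - (x-1)) with ((k-x)+1) by lia. rewrite even_S.
    intro C; symmetry in C; revert C. apply flip_if; auto.
Qed.

Lemma filledb_t p : filledb p = true -> absm p = k /\ 0 <= fst p /\ 0 <= snd p /\ D p = S0.
Proof. unfold filledb. rewrite !andb_true_iff, Z.eqb_eq, !Z.leb_le, sym_eqb_spec. tauto. Qed.
Lemma filledb_f p : filledb p = false -> absm p = k -> 0 <= fst p -> 0 <= snd p -> D p <> S0.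
Proof. unfold filledb. intros H H1 H2 H3 H4.
  rewrite (proj2 (Z.eqb_eq _ _) H1), (proj2 (Z.leb_le _ _) H2), (proj2 (Z.leb_le _ _) H3),
    (proj2 (sym_eqb_spec _ _) H4) in H. discriminate. Qed.
Lemma filledb_lvl p : absm p <> k -> filledb p = false.
Proof. intros H. unfold filledb. rewrite <- Z.eqb_neq in H. rewrite H. reflexivity. Qed.
Lemma filledb_neg p : fst p < 0 \/ snd p < 0 -> filledb p = false.
Proof. intros H. unfold filledb. destruct H as [H|H].
  - rewrite <- Z.leb_gt in H. rewrite H, andb_false_r. reflexivity.
  - rewrite <- Z.leb_gt in H. rewrite H. rewrite !andb_false_r. reflexivity. Qed.
Lemma Dext_f p : filledb p = false -> Dext p = D p.
Proof. unfold Dext; intros ->; auto. Qed.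

Lemma supp_m0_ne x y : absm (x,y) = k -> D (x,y) = S0 -> x <> m0.
Proof. intros H1 H2 e. apply Hm0. unfold absm in H1; simpl in H1.
  rewrite <- e. replace (k - x) with y by lia. auto. Qed.

Lemma node_pres a : is_node Dext a -> is_node D (fmap a).
Proof.
  destruct a as [x y]. rewrite !node_b. unfold fmap. simpl.
  destruct ((x =? 0) && (y =? k+1) && sym_eqb (D (0,k)) S0) eqn:E1.
  { intros _. rewrite !andb_true_iff, !Z.eqb_eq, sym_eqb_spec in E1.
    destruct E1 as [[-> ->] E]. simpl. rewrite E, (Dzero (-1,k)) by (simpl; lia).
    apply M4a. replace (k-1) with (k-1) by lia. apply r0_nz. }
  destruct ((x =? k+1) && (y =? 0) && sym_eqb (D (k,0)) S0) eqn:E2.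
  { intros _. rewrite !andb_true_iff, !Z.eqb_eq, sym_eqb_spec in E2.
    destruct E2 as [[-> ->] E]. simpl. rewrite E, (Dzero (k,-1)) by (simpl; lia).
    apply M4b. apply rk_nz. }
  unfold Dext. simpl.
  destruct (filledb (x,y)) eqn:F0, (filledb (x-1,y)) eqn:F1, (filledb (x,y-1)) eqn:F2;
    intros H;
    repeat match goal with
    | F : filledb _ = true |- _ => apply filledb_t in F; simpl in F; unfold absm in F; simpl in F
    end; try lia; auto.
  - destruct F0 as [L [X [Y Z0]]]. rewrite Z0.
    destruct (Z_le_gt_dec 1 x).
    + apply (M1a (fill x)); [apply Hlow; unfold absm; simpl; lia | exact H].
    + apply (M1b (fill x)); [apply Hlow; unfold absm; simpl; lia | exact H].
  - exfalso. destruct F1 as [L1 [X1 [Y1 Z1]]]. destruct F2 as [L2 [X2 [Y2 Z2]]].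
    rewrite M2 in H; try discriminate; try apply fill_nz.
    apply fill_alt.
    + apply (supp_m0_ne (x-1) y); [unfold absm; simpl; lia | exact Z1].
    + apply (supp_m0_ne x (y-1)); [unfold absm; simpl; lia | exact Z2].
  - destruct F1 as [L1 [X1 [Y1 Z1]]]. rewrite Z1.
    apply (M1c _ (fill (x-1))); auto.
    destruct (Z_le_gt_dec 1 y).
    + apply filledb_f; auto; unfold absm; simpl; lia.
    + exfalso. assert (x = k+1) by lia. assert (y = 0) by lia. subst.
      rewrite Z.eqb_refl in E2. simpl in E2. replace (k+1-1) with k in Z1 by lia.
      rewrite Z1 in E2. discriminate.
  - destruct F2 as [L2 [X2 [Y2 Z2]]]. rewrite Z2.
    apply (M1d _ _ (fill x)); auto.
    destruct (Z_le_gt_dec 1 x).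
    + apply filledb_f; auto; unfold absm; simpl; lia.
    + exfalso. assert (x = 0) by lia. assert (y = k+1) by lia. subst.
      rewrite Z.eqb_refl in E1. rewrite Z.eqb_refl in E1. simpl in E1.
      replace (k+1-1) with k in Z2 by lia.
      rewrite Z2 in E1. discriminate.
Qed.

Lemma not_node_0k : D (0,k) = S0 -> ~ is_node Dext (0,k).
Proof.
  intros E H. rewrite node_b in H. simpl in H.
  assert (F : filledb (0,k) = true).
  { unfold filledb. simpl. rewrite E. unfold absm; simpl.
    rewrite Z.eqb_refl. simpl. destruct (Z.leb_spec 0 k); [reflexivity|lia]. }
  unfold Dext at 1 in H. rewrite F in H. simpl in H.
  rewrite !Dext_f in H by (apply filledb_neg; simpl; lia) || (apply filledb_lvl; unfold absm; simpl; lia).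
  rewrite (Dzero (-1,k)) in H by (simpl; lia).
  rewrite M3a in H; try discriminate.
  - apply r0_nz.
  - apply fill_nz.
  - unfold fill. assert (0 < m0).
    { destruct (Z.eq_dec m0 0); try lia. exfalso. apply Hm0. rewrite e.
      replace (k-0) with k by lia. auto. }
    destruct (Z.ltb_spec 0 m0); try lia. simpl. apply flip_ne, r0_nz.
Qed.

Lemma not_node_k0 : D (k,0) = S0 -> ~ is_node Dext (k,0).
Proof.
  intros E H. rewrite node_b in H. simpl in H.
  assert (F : filledb (k,0) = true).
  { unfold filledb. simpl. rewrite E. unfold absm; simpl.
    rewrite Z.add_0_r, Z.eqb_refl. simpl. destruct (Z.leb_spec 0 k); [reflexivity|lia]. }
  unfold Dext at 1 in H. rewrite F in H. simpl in H.
  rewrite !Dext_f in H by (apply filledb_neg; simpl; lia) || (apply filledb_lvl; unfold absm; simpl; lia).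
  rewrite (Dzero (k,-1)) in H by (simpl; lia).
  rewrite M3b in H; try discriminate.
  - apply rk_nz.
  - apply fill_nz.
  - unfold fill. assert (m0 < k).
    { destruct (Z.eq_dec m0 k); try lia. exfalso. apply Hm0. rewrite e.
      replace (k-k) with 0 by lia. auto. }
    destruct (Z.ltb_spec k m0); try lia. rewrite Z.sub_diag. simpl. apply flip_ne, rk_nz.
Qed.

Lemma fmap_inj a b : is_node Dext a -> is_node Dext b -> fmap a = fmap b -> a = b.
Proof.
  destruct a as [x y], b as [u v]. unfold fmap. simpl.
  destruct ((x =? 0) && (y =? k+1) && sym_eqb (D (0,k)) S0) eqn:A1;
  [|destruct ((x =? k+1) && (y =? 0) && sym_eqb (D (k,0)) S0) eqn:A2];
  (destruct ((u =? 0) && (v =? k+1) && sym_eqb (D (0,k)) S0) eqn:B1;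
  [|destruct ((u =? k+1) && (v =? 0) && sym_eqb (D (k,0)) S0) eqn:B2]);
  repeat match goal with
  | F : _ && _ && _ = true |- _ => rewrite !andb_true_iff, !Z.eqb_eq, sym_eqb_spec in F;
      destruct F as [[? ?] ?]; subst
  end; intros Ha Hb He; try (injection He; intros; lia); auto.
  - injection He; intros; subst. exfalso. apply (not_node_0k H1 Hb).
  - injection He; intros; subst. exfalso. apply (not_node_k0 H1 Hb).
  - injection He; intros; subst. exfalso. apply (not_node_0k H1 Ha).
  - injection He; intros; subst. exfalso. apply (not_node_k0 H1 Ha).
Qed.

Lemma Dext_keep p : in_supp D p -> Dext p = D p.
Proof. intros H. apply Dext_f. unfold filledb.
  destruct (sym_eqb (D p) S0) eqn:E. apply sym_eqb_spec in E. contradiction.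
  rewrite !andb_false_r. reflexivity. Qed.

Lemma Dext_supp p : in_supp Dext p -> in_supp D p \/ (absm p = k /\ 0 <= fst p /\ 0 <= snd p).
Proof. intros H. destruct (filledb p) eqn:F.
  - right. apply filledb_t in F. tauto.
  - left. unfold in_supp in *. rewrite Dext_f in H; auto. Qed.

Lemma Dext_full p : 0 <= fst p -> 0 <= snd p -> absm p <= k -> in_supp Dext p.
Proof. intros H1 H2 H3. destruct (Z.eq_dec (absm p) k).
  - destruct (filledb p) eqn:F.
    + unfold in_supp, Dext. rewrite F. apply fill_nz.
    + unfold in_supp. rewrite Dext_f; auto. apply filledb_f; auto.
  - assert (in_supp D p) by (apply Hlow; lia). unfold in_supp. rewrite Dext_keep; auto.
Qed.
End Fill.

Definition diag (k : Z) : list pt :=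
  map (fun i => (Z.of_nat i, k - Z.of_nat i)) (seq 0 (Z.to_nat k + 1)).

Lemma in_diag k p : absm p = k -> 0 <= fst p -> 0 <= snd p -> In p (diag k).
Proof. destruct p as [x y]. unfold absm; simpl. intros H1 H2 H3.
  unfold diag. apply (proj2 (in_map_iff _ _ _)). exists (Z.to_nat x). split.
  - rewrite Z2Nat.id by lia. f_equal; lia.
  - apply in_seq. lia. Qed.

Definition sym_nz (s : sym) := negb (sym_eqb s S0).

Theorem mainTheorem6 (D : diagram) (d k : Z) :
  newton_diagram D ->
  supp_size D d ->
  supp_connected D ->
  in_supp D (0, 0) ->
  k < d ->
  (forall m : pt, 0 <= fst m -> 0 <= snd m -> absm m <= k - 1 -> in_supp D m) ->
  exists D' : diagram,
    extension D' D /\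
    (forall c c' : nat, num_nodes D c -> num_nodes D' c' -> (c' <= c)%nat) /\
    (forall m : pt, 0 <= fst m -> 0 <= snd m -> absm m <= k -> in_supp D' m).
Proof.
  intros HN Hsz Hcon H00 Hkd Hlow.
  pose proof HN as [[L HL] [Hne Hneg]].
  destruct (Z_le_gt_dec k 0) as [Hk0|Hk1].
  { exists D. split; [|split].
    - split; auto.
    - intros c c' H1 H2. apply (count_le D D (fun a => a) c c'); auto.
    - intros [x y] H1 H2 H3. unfold absm in H3; simpl in *.
      replace (x,y) with (0,0) by (f_equal; lia). auto. }
  destruct Hsz as [kk [a1 [a2 [[w [Hw Hwk]] [Hkk [[u1 [Hu1 Hu1e]] [Ha1 [[u2 [Hu2 Hu2e]] [Ha2 Hd]]]]]]]]].
  assert (a1 = 0). { specialize (Ha1 _ H00). apply Hneg in Hu1. simpl in *. lia. }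
  assert (a2 = 0). { specialize (Ha2 _ H00). apply Hneg in Hu2. simpl in *. lia. }
  subst a1 a2.
  destruct (Hcon (0,0) w H00 Hw) as [p [Hp Hlast]].
  destruct (path_level D k p (0,0) H00 Hp) as [z [Hz Hzk]].
  { unfold absm; simpl; lia. }
  { rewrite Hlast. lia. }
  destruct z as [m0 zz]. pose proof (Hneg _ Hz) as Hzn. simpl in Hzn.
  unfold absm in Hzk; simpl in Hzk.
  assert (Hm0 : in_supp D (m0, k - m0)) by (replace (k - m0) with zz by lia; auto).
  assert (Hm0r : 0 <= m0 <= k) by lia.
  assert (Hk : 1 <= k) by lia.
  assert (Hneg' : forall p, in_supp D p -> 0 <= fst p /\ 0 <= snd p) by auto.
  exists (Dext D k m0). split; [|split].
  - split; [split; [|split]|split].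
    + exists (filter (fun p => sym_nz (Dext D k m0 p)) (L ++ diag k)).
      intros q. rewrite filter_In, in_app_iff. unfold sym_nz, in_supp.
      rewrite negb_true_iff. split.
      * intros Hs. split.
        -- destruct (Dext_supp D k m0 Hm0r q Hs) as [H'|[Hq1 [Hq2 Hq3]]].
           ++ left. apply HL. auto.
           ++ right. apply in_diag; auto.
        -- destruct (sym_eqb (Dext D k m0 q) S0) eqn:E; auto. apply sym_eqb_spec in E. contradiction.
      * intros [_ Hs] E. rewrite E in Hs. discriminate.
    + exists (0,0). unfold in_supp. rewrite (Dext_keep D k m0 (0,0)); auto.
    + intros q Hs. destruct (Dext_supp D k m0 Hm0r q Hs) as [H'|[Hq1 [Hq2 Hq3]]]; auto.
    + intros q Hs. pose proof Hs as Hs'. apply (Dext_keep D k m0 q) in Hs; auto. unfold in_supp. rewrite Hs. auto.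
    + intros q Hs. apply Dext_keep; auto.
  - intros c c' H1 H2.
    apply (count_le D (Dext D k m0) (fmap D k) c c'); auto.
    + intros a. apply node_pres; auto.
    + intros a b. apply fmap_inj; auto.
  - intros q H1 H2 H3. apply Dext_full; auto.
Qed.
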